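(* Let $S$ be a numerical semigroup with multiplicity $e$ and blowup $B$. If ${\rm adj}(S)=\operatorname{Ap}(B;e)$, then ${\rm d}_{\max}(S)=\max\{d(f;B^{\mathcal D}): f\in\operatorname{maxAp}(B;e)\}$.
   Context: $S$ is a numerical semigroup (a submonoid of $\mathbb N$ with finite complement) with minimal generators $e<a_1<\dots<a_t$. An $S$-factorization of $n$ is $(c_0,\dots,c_t)\in\mathbb N^{t+1}$ with $c_0e+\sum c_ia_i=n$, of length $\sum c_i$. ${\rm ord}(n;S)$ is the maximal such length, ${\rm d}_{\max}(n;S)$ is the number of factorizations of maximal length, and ${\rm d}_{\max}(S)=\max_{n\in S}{\rm d}_{\max}(n;S)$. ${\rm adj}(S)=\{s-{\rm ord}(s;S)e:s\in S\}$. The blowup is $B=\langle e,d_1,\dots,d_t\rangle$ with $d_i=a_i-e$, and $\mathcal D=(e,d_1,\dots,d_t)$. $d(b;B^{\mathcal D})$ is the number of tuples $(x_0,\dots,x_t)\in\mathbb N^{t+1}$ with $x_0e+\sum x_id_i=b$. $\operatorname{Ap}(B;e)=\{w\in B:w-e\notin B\}$, and $\operatorname{maxAp}(B;e)$ is the set of elements of $\operatorname{Ap}(B;e)\setminus\{0\}$ that are maximal with respect to the partial order $w\preceq w'$ iff $w'-w\in B$. *)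

(* Defs.v *)
From mathcomp Require Import all_boot.
Set Implicit Arguments. Unset Strict Implicit. Unset Printing Implicit Defensive.

Definition in_sg (g : seq nat) (n : nat) : Prop :=
  exists c : 'I_(size g) -> nat, \sum_(i < size g) c i * nth 0 g i = n.

(* All g-factorizations (c_0,...,c_{k-1}) of n.  Since every g_i >= 1
   (guaranteed by the hypotheses below), each c_i <= n, so entries are
   taken in 'I_n.+1 without loss. *)
Definition facts (g : seq nat) (n : nat) : {set {ffun 'I_(size g) -> 'I_n.+1}} :=
  [set c : {ffun 'I_(size g) -> 'I_n.+1} | \sum_(i < size g) (c i : nat) * nth 0 g i == n].

Definition flen (k n : nat) (c : {ffun 'I_k -> 'I_n.+1}) : nat :=
  \sum_(i < k) (c i : nat).

Definition ord (g : seq nat) (n : nat) : nat :=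
  \max_(c in facts g n) flen c.

Definition dmax_at (g : seq nat) (n : nat) : nat :=
  #|[set c in facts g n | flen c == ord g n]|.

Definition dcount (g : seq nat) (b : nat) : nat := #|facts g b|.

Definition remove_at (i : nat) (g : seq nat) : seq nat := take i g ++ drop i.+1 g.

Definition numsg_min_gens (g : seq nat) : Prop :=
  [/\ g <> [::],
      0 < head 0 g,
      sorted ltn g,
      (exists N, forall n, N <= n -> in_sg g n)
    & forall i, i < size g -> ~ in_sg (remove_at i g) (nth 0 g i) ].

Definition mult (g : seq nat) : nat := head 0 g.

Definition blowup (g : seq nat) : seq nat :=
  mult g :: [seq a - mult g | a <- behead g].

Definition adj (g : seq nat) (x : nat) : Prop :=
  exists s, in_sg g s /\ x = s - ord g s * mult g.

(* Ap(B; e) = { w in B : w - e notin B } (w - e < 0 counts as not in B) *)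
Definition Ap (B : seq nat) (e w : nat) : Prop :=
  in_sg B w /\ ~ (e <= w /\ in_sg B (w - e)).

Definition preceq (B : seq nat) (w w' : nat) : Prop :=
  w <= w' /\ in_sg B (w' - w).

Definition maxAp (B : seq nat) (e w : nat) : Prop :=
  [/\ Ap B e w, w <> 0 &
      forall w', Ap B e w' -> w' <> 0 -> preceq B w w' -> w' = w].

Definition is_max (P : nat -> Prop) (m : nat) : Prop :=
  P m /\ forall k, P k -> k <= m.

(* Main.v *)
Require Import Defs.
From mathcomp Require Import all_boot zify.
From Stdlib Require Import Classical.
Set Implicit Arguments. Unset Strict Implicit. Unset Printing Implicit Defensive.

Lemma sum_split k (F : 'I_k.+1 -> nat) (w : nat -> nat) :
  \sum_(i < k.+1) F i * w i = F ord0 * w 0 + \sum_(0 <= j < k) F (inord j.+1) * w j.+1.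
Proof.
rewrite big_ord_recl big_mkord; congr (_ + _); apply: eq_bigr => i _.
have -> : lift ord0 i = inord i.+1 :> 'I_k.+1 by apply: val_inj; rewrite /= inordK // ltnS.
by rewrite inordK // ltnS.
Qed.

Lemma argmax_bounded (Q : nat -> Prop) (h : nat -> nat) K :
  (forall f, Q f -> f < K) -> (exists f, Q f) ->
  exists f0, Q f0 /\ forall f, Q f -> h f <= h f0.
Proof.
elim: K Q => [|K IH] Q hb [f Qf]; first by have := hb f Qf.
case: (classic (exists f, Q f /\ f < K)) => [[f1 [Qf1 lt1]]|nf].
- have [f0 [[Qf0 _] H0]] := IH (fun f => Q f /\ f < K) (fun f H => H.2) (ex_intro _ f1 (conj Qf1 lt1)).
  case: (classic (Q K)) => QK.
  + case: (leqP (h K) (h f0)) => hK.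
    * exists f0; split => // f' Qf'; have := hb f' Qf'; rewrite ltnS leq_eqVlt => /orP[/eqP->//|lt]; exact: H0.
    * exists K; split => // f' Qf'; have := hb f' Qf'; rewrite ltnS leq_eqVlt => /orP[/eqP->//|lt].
      have := H0 f' (conj Qf' lt); lia.
  + exists f0; split => // f' Qf'; have := hb f' Qf'; rewrite ltnS leq_eqVlt => /orP[/eqP Hf|lt]; [by subst; contradiction| exact: H0].
- have QK : Q K.
    have := hb f Qf; rewrite ltnS leq_eqVlt => /orP[/eqP<-//|lt].
    by exfalso; apply: nf; exists f.
  exists K; split => // f' Qf'; have := hb f' Qf'; rewrite ltnS leq_eqVlt => /orP[/eqP->//|lt].
  by exfalso; apply: nf; exists f'.
Qed.

Lemma ex_min_classic (P : nat -> Prop) : (exists n, P n) -> exists n, P n /\ forall m, P m -> n <= m.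
Proof.
move=> [n Pn]; apply: NNPP => Hno.
have H : forall N k, k <= N -> ~ P k.
  elim=> [|N IH] k le Pk; apply: Hno; exists k; split => // m Pm;
  rewrite leqNgt; apply/negP => lt.
  - lia.
  - by apply: (IH m) => //; lia.
exact: (H n n (leqnn n) Pn).
Qed.

Lemma card_le_inj (T U : finType) (A : {set T}) (B : {set U}) (f : T -> U) :
  {in A &, injective f} -> (forall x, x \in A -> f x \in B) -> #|A| <= #|B|.
Proof.
move=> inj fAB; rewrite -(card_in_imset inj); apply: subset_leq_card.
by apply/subsetP => y /imsetP [x xA ->]; apply: fAB.
Qed.

Lemma insg_facts (h : seq nat) n : (forall i, i < size h -> 0 < nth 0 h i) ->
  in_sg h n -> exists c, c \in facts h n.
Proof.
move=> pos [c Hc].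
have bd : forall i, c i <= n.
  move=> i; rewrite -Hc (bigD1 i) //=; apply: leq_trans (leq_addr _ _).
  exact: leq_pmulr (pos i (ltn_ord i)).
exists [ffun i => inord (c i)]; rewrite inE; apply/eqP; rewrite -[X in _ = X]Hc.
by apply: eq_bigr => i _; rewrite ffunE inordK // ltnS bd.
Qed.

Lemma dcount_mono h w w' : (forall i, i < size h -> 0 < nth 0 h i) ->
  w <= w' -> in_sg h (w' - w) -> #|facts h w| <= #|facts h w'|.
Proof.
move=> pos le Hin; have [y Hy] := insg_facts pos Hin.
have bd : forall (x : {ffun 'I_(size h) -> 'I_w.+1}) i, x i + y i < w'.+1.
  move=> x i; have := ltn_ord (x i); have := ltn_ord (y i); lia.
apply: (@card_le_inj _ _ _ _ (fun x : {ffun 'I_(size h) -> 'I_w.+1} => [ffun i => inord (x i + y i) : 'I_w'.+1])).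
- move=> x x' _ _ /ffunP E; apply/ffunP => i; have := E i; rewrite !ffunE.
  move=> /(congr1 val); rewrite /= !inordK ?bd // => E2; apply: val_inj; apply/eqP; by rewrite -(eqn_add2r (y i)) E2.
- move=> x Hx; rewrite /facts !inE in Hx Hy *.
  rewrite (eq_bigr (fun i => x i * nth 0 h i + y i * nth 0 h i)).
    rewrite big_split /= (eqP Hx) (eqP Hy); apply/eqP; lia.
  by move=> i _; rewrite ffunE inordK ?bd // mulnDl.
Qed.
Definition SA (gs : seq nat) (h : nat -> nat) := \sum_(0 <= j < size gs) h j * nth 0 gs j.
Definition SD (e : nat) (gs : seq nat) (h : nat -> nat) := \sum_(0 <= j < size gs) h j * (nth 0 gs j - e).
Definition SH (m : nat) (h : nat -> nat) := \sum_(0 <= j < m) h j.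

Definition cv k p (c : {ffun 'I_k.+1 -> 'I_p.+1}) (j : nat) : nat := c (inord j.+1).
Definition mk k p (x0 : nat) (h : nat -> nat) : {ffun 'I_k.+1 -> 'I_p.+1} :=
  [ffun i : 'I_k.+1 => inord (match nat_of_ord i with 0 => x0 | j.+1 => h j end)].

Lemma mk0 k p x0 h : x0 <= p -> (mk k p x0 h ord0 : nat) = x0.
Proof. by move=> le; rewrite ffunE /= inordK. Qed.

Lemma mkv k p x0 h j : j < k -> h j <= p -> cv (mk k p x0 h) j = h j.
Proof. by move=> lt le; rewrite /cv ffunE (@inordK k j.+1) //= inordK. Qed.

Lemma cv_eq k p (c c' : {ffun 'I_k.+1 -> 'I_p.+1}) :
  (c ord0 : nat) = c' ord0 -> (forall j, j < k -> cv c j = cv c' j) -> c = c'.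
Proof.
move=> E0 E; apply/ffunP => i; apply: val_inj; case: i => [[|j] lt].
  by have -> : Ordinal lt = ord0 by apply: val_inj.
have -> : Ordinal lt = inord j.+1 by apply: val_inj; rewrite /= inordK.
exact: E.
Qed.

Lemma sum_ffun k p (c : {ffun 'I_k.+1 -> 'I_p.+1}) (w : nat -> nat) :
  \sum_(i < k.+1) (c i : nat) * w i = c ord0 * w 0 + \sum_(0 <= j < k) cv c j * w j.+1.
Proof. exact: (sum_split (fun i => nat_of_ord (c i))). Qed.

Lemma flenE k p (c : {ffun 'I_k.+1 -> 'I_p.+1}) : flen c = c ord0 + SH k (cv c).
Proof.
rewrite /flen /SH big_ord_recl big_mkord; congr (_ + _); apply: eq_bigr => i _.
rewrite /cv; congr (nat_of_ord (c _)); apply: val_inj; by rewrite /= inordK // ltnS.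
Qed.

Lemma SA_SD e gs h : (forall j, j < size gs -> e < nth 0 gs j) ->
  SA gs h = SD e gs h + SH (size gs) h * e.
Proof.
move=> He; rewrite /SA /SD /SH big_distrl -big_split /=.
apply: eq_big_nat => j /andP[_ lt]; rewrite -mulnDr subnK //; exact: ltnW (He j lt).
Qed.

Lemma SH_SD e gs h : (forall j, j < size gs -> e < nth 0 gs j) ->
  SH (size gs) h <= SD e gs h.
Proof.
move=> He; rewrite /SD /SH big_nat_cond [X in _ <= X]big_nat_cond.
apply: leq_sum => j /andP[/andP[_ lt] _]; apply: leq_pmulr; rewrite subn_gt0; exact: He.
Qed.

Lemma h_SD e gs h j : (forall j, j < size gs -> e < nth 0 gs j) -> j < size gs ->
  h j <= SD e gs h.
Proof.
move=> He lt; rewrite /SD big_mkord (bigD1 (Ordinal lt)) //=.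
apply: leq_trans (leq_addr _ _); apply: leq_pmulr; rewrite subn_gt0; exact: He.
Qed.

Lemma SD_add e gs h h' : SD e gs (fun j => h j + h' j) = SD e gs h + SD e gs h'.
Proof. by rewrite /SD -big_split; apply: eq_bigr => j _; rewrite mulnDl. Qed.

Lemma SD0 e gs : SD e gs (fun _ => 0) = 0.
Proof. by rewrite /SD big1. Qed.

Lemma sum_bs e gs (F : nat -> nat) :
  \sum_(0 <= j < size [seq a - e | a <- gs]) F j * nth 0 [seq a - e | a <- gs] j = SD e gs F.
Proof.
rewrite size_map /SD; apply: eq_big_nat => j /andP[_ lt]; by rewrite (nth_map 0).
Qed.

Lemma insg_S e gs n : in_sg (e :: gs) n <-> exists c0 h, c0 * e + SA gs h = n.
Proof.
split.
- case=> c; rewrite (sum_split c (nth 0 (e :: gs))) /= => <-.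
  by exists (c ord0), (fun j => c (inord j.+1)).
- case=> c0 [h <-].
  exists (fun i : 'I_(size gs).+1 => match nat_of_ord i with 0 => c0 | j.+1 => h j end).
  rewrite (sum_split _ (nth 0 (e :: gs))) /=; congr (_ + _).
  by apply: eq_big_nat => j /andP[_ lt]; rewrite inordK.
Qed.

Lemma insg_B e gs w : in_sg (e :: [seq a - e | a <- gs]) w <->
  exists x0 h, x0 * e + SD e gs h = w.
Proof.
split.
- case=> c; rewrite (sum_split c (nth 0 (e :: _))) /= sum_bs => <-.
  by exists (c ord0), (fun j => c (inord j.+1)).
- case=> c0 [h <-].
  exists (fun i : 'I_(size [seq a - e | a <- gs]).+1 => match nat_of_ord i with 0 => c0 | j.+1 => h j end).
  rewrite (sum_split _ (nth 0 (e :: _))) /= sum_bs; congr (_ + _).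
  rewrite /SD; apply: eq_big_nat => j /andP[_ lt]; rewrite inordK //; by rewrite size_map ltnS.
Qed.

Lemma facts_S e gs n (c : {ffun 'I_(size gs).+1 -> 'I_n.+1}) :
  (c \in facts (e :: gs) n) = (c ord0 * e + SA gs (cv c) == n).
Proof. by rewrite /facts inE (sum_ffun c (nth 0 (e :: gs))). Qed.

Lemma facts_B e gs n (c : {ffun 'I_(size [seq a - e | a <- gs]).+1 -> 'I_n.+1}) :
  (c \in facts (e :: [seq a - e | a <- gs]) n) = (c ord0 * e + SD e gs (cv c) == n).
Proof. by rewrite /facts inE (sum_ffun c (nth 0 (e :: _))) /= sum_bs. Qed.
Lemma ord_ge (g : seq nat) n c : c \in facts g n -> flen c <= ord g n.
Proof. by move=> H; rewrite /ord; apply: leq_bigmax_cond. Qed.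

Lemma ord_ex (g : seq nat) n c : c \in facts g n -> exists2 c', c' \in facts g n & ord g n = flen c'.
Proof.
move=> H; have [|c' Hc' E] := eq_bigmax_cond (flen (n:=n)) (A := mem (facts g n)).
  by apply/card_gt0P; exists c.
by exists c'.
Qed.

Lemma ord_exS e gs n (c : {ffun 'I_(size gs).+1 -> 'I_n.+1}) : c \in facts (e :: gs) n ->
  exists c' : {ffun 'I_(size gs).+1 -> 'I_n.+1},
    (c' ord0 : nat) * e + SA gs (cv c') = n /\ ord (e :: gs) n = c' ord0 + SH (size gs) (cv c').
Proof.
move=> /ord_ex [c' Hc' Lc']; exists c'; split; last by rewrite Lc' flenE.
by move: Hc'; rewrite facts_S => /eqP.
Qed.

Theorem proposition4p2 (g : seq nat) :
  numsg_min_gens g ->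
  1 < mult g ->
  (forall x, adj g x <-> Ap (blowup g) (mult g) x) ->
  exists M,
    is_max (fun v => exists n, in_sg g n /\ v = dmax_at g n) M /\
    is_max (fun v => exists f, maxAp (blowup g) (mult g) f /\ v = dcount (blowup g) f) M.
Proof.
case: g => [|e gs]; first by case.
move=> [_ /= e0 srt [N HN] _]; rewrite /blowup /mult /= => e1 Hadj.
have He : forall j, j < size gs -> e < nth 0 gs j.
  by move=> j lt; move: (order_path_min ltn_trans srt) => /(all_nthP 0); apply.
have posS : forall i, i < size (e :: gs) -> 0 < nth 0 (e :: gs) i.
  case=> [|j] //= lt; apply: leq_trans (He j lt); exact: leq0n.
have posB : forall i, i < size (e :: [seq a - e | a <- gs]) -> 0 < nth 0 (e :: [seq a - e | a <- gs]) i.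
  case=> [|j] //=; rewrite size_map => lt; rewrite (nth_map 0) // subn_gt0; exact: He.
have IB_add : forall w w', in_sg (e :: [seq a - e | a <- gs]) w -> in_sg (e :: [seq a - e | a <- gs]) w' ->
    in_sg (e :: [seq a - e | a <- gs]) (w + w').
  move=> w w' /insg_B [x0 [h <-]] /insg_B [y0 [h' <-]]; apply/insg_B.
  exists (x0 + y0), (fun j => h j + h' j); rewrite SD_add mulnDl; lia.
have IB_ke : forall k, in_sg (e :: [seq a - e | a <- gs]) (k * e).
  by move=> k; apply/insg_B; exists k, (fun _ => 0); rewrite SD0 addn0.
have IB0 : in_sg (e :: [seq a - e | a <- gs]) 0 by have := IB_ke 0; rewrite mul0n.
have IS_IB : forall n, in_sg (e :: gs) n -> in_sg (e :: [seq a - e | a <- gs]) n.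
  move=> n /insg_S [c0 [h <-]]; apply/insg_B; exists (c0 + SH (size gs) h), h.
  rewrite (SA_SD _ He) mulnDl; lia.
have Abd : forall w, Ap (e :: [seq a - e | a <- gs]) e w -> w < N + e.
  move=> w [_ nA]; rewrite ltnNge; apply/negP => le; apply: nA; split; first lia.
  apply: IS_IB; apply: HN; lia.
have [w1 [[IB1 m1] min1]] : exists w, (in_sg (e :: [seq a - e | a <- gs]) w /\ w %% e = 1) /\
    forall m, in_sg (e :: [seq a - e | a <- gs]) m /\ m %% e = 1 -> w <= m.
  apply: ex_min_classic; exists (N * e + 1); split.
    apply: IS_IB; apply: HN; nia.
  by rewrite modnMDl modn_small.
have nz1 : w1 <> 0 by move=> E; move: m1; rewrite E mod0n.
have Ap1 : Ap (e :: [seq a - e | a <- gs]) e w1.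
  split => // [[le IBm]].
  have : w1 <= w1 - e.
    apply: min1; split => //; by rewrite -m1 -{2}(subnK le) modnDr.
  lia.
have up : forall w0, Ap (e :: [seq a - e | a <- gs]) e w0 -> w0 <> 0 ->
    exists f, maxAp (e :: [seq a - e | a <- gs]) e f /\ preceq (e :: [seq a - e | a <- gs]) w0 f.
  move=> w0 A0 nz0.
  have pw0 : preceq (e :: [seq a - e | a <- gs]) w0 w0 by split => //; rewrite subnn.
  have [f0 [[Af0 [nzf0 [pf0 pf0']]] Hf0]] := @argmax_bounded
     (fun w => Ap (e :: [seq a - e | a <- gs]) e w /\ w <> 0 /\ preceq (e :: [seq a - e | a <- gs]) w0 w) id (N + e)
     (fun f H => Abd f H.1) (ex_intro _ w0 (conj A0 (conj nz0 pw0))).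
  exists f0; split => //; split => // w' Aw' nz' [le' IB'].
  have IBw : in_sg (e :: [seq a - e | a <- gs]) (w' - w0).
    have -> : w' - w0 = (w' - f0) + (f0 - w0) by lia.
    exact: IB_add.
  have := Hf0 w' (conj Aw' (conj nz' (conj (leq_trans pf0 le') IBw))) => /=; lia.
have up0 : forall w0, Ap (e :: [seq a - e | a <- gs]) e w0 ->
    exists f, maxAp (e :: [seq a - e | a <- gs]) e f /\ preceq (e :: [seq a - e | a <- gs]) w0 f.
  move=> w0 A0; case: (eqVneq w0 0) => [->|nz0]; last by apply: up => //; apply/eqP.
  have [f [Mf _]] := up w1 Ap1 nz1; exists f; split => //; split => //.
  by rewrite subn0; case: Mf => [[]].
have dmax_le : forall n, dmax_at (e :: gs) n <= dcount (e :: [seq a - e | a <- gs]) (n - ord (e :: gs) n * e).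
  move=> n; rewrite /dmax_at /dcount.
  set L := ord (e :: gs) n; set r := n - L * e.
  have key : forall c : {ffun 'I_(size gs).+1 -> 'I_n.+1},
      c \in [set c in facts (e :: gs) n | flen c == L] ->
      SD e gs (cv c) = r /\ (c ord0 : nat) = L - SH (size gs) (cv c) /\ forall j, j < size gs -> cv c j <= r.
    move=> c; rewrite inE facts_S flenE => /andP[/eqP Hc0 /eqP Hl0].
    have Hc : (c ord0 : nat) * e + SA gs (cv c) = n by [].
    have Hl : (c ord0 : nat) + SH (size gs) (cv c) = L by [].
    have E1 := SA_SD (cv c) He.
    have E2 : L * e = c ord0 * e + SH (size gs) (cv c) * e by rewrite -Hl mulnDl.
    have SDr : SD e gs (cv c) = r by rewrite /r; lia.
    split => //; split; first lia.
    by move=> j lt; rewrite -SDr; apply: h_SD.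
  apply: (@card_le_inj _ _ _ _ (fun c : {ffun 'I_(size gs).+1 -> 'I_n.+1} => mk (size [seq a - e | a <- gs]) r 0 (cv c))).
  - move=> c c' Hc Hc' E.
    have [SDc [c0 bdc]] := key c Hc; have [SDc' [c0' bdc']] := key c' Hc'.
    have Ej : forall j, j < size gs -> cv c j = cv c' j.
      move=> j lt; have b1 := bdc j lt; have b2 := bdc' j lt.
      by have := congr1 (fun x => cv x j) E; rewrite /= !mkv ?size_map.
    apply: cv_eq => //; first by rewrite c0 c0' /SH; congr (_ - _); apply: eq_big_nat => j /andP[_ lt]; apply: Ej.
  - move=> c Hc; have [SDc [c0 bdc]] := key c Hc.
    rewrite facts_B mk0 // mul0n add0n; apply/eqP; rewrite -[X in _ = X]SDc.
    rewrite /SD; apply: eq_big_nat => j /andP[_ lt]; have b1 := bdc j lt; by rewrite mkv ?size_map.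
have achieve : forall f, Ap (e :: [seq a - e | a <- gs]) e f ->
    exists n, in_sg (e :: gs) n /\ dcount (e :: [seq a - e | a <- gs]) f <= dmax_at (e :: gs) n.
  move=> f Af; have [s [Ss fE]] := (Hadj f).2 Af; rewrite /mult /= in fE.
  have [cs Hcs] := insg_facts posS Ss.
  have [cm [Hcm Lcm]] := ord_exS Hcs.
  set L0 := ord (e :: gs) s in fE Lcm.
  have E1 := SA_SD (cv cm) He.
  have E2 : L0 * e = cm ord0 * e + SH (size gs) (cv cm) * e by rewrite Lcm mulnDl.
  have sE : s = f + L0 * e by lia.
  set n := s + f * e.
  have cm0s : (cm ord0 : nat) <= s by rewrite -ltnS ltn_ord.
  have cmjs : forall j, cv cm j <= s by move=> j; rewrite -ltnS ltn_ord.
  have fn : f <= f * e by rewrite leq_pmulr.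
  have c1n : (cm ord0 : nat) + f <= n by rewrite /n; lia.
  have c1j : forall j, j < size gs -> cv cm j <= n.
    by move=> j _; apply: leq_trans (cmjs j) _; rewrite /n leq_addr.
  set c1 := mk (size gs) n (cm ord0 + f) (cv cm).
  have SAc1 : SA gs (cv c1) = SA gs (cv cm).
    by rewrite /SA; apply: eq_big_nat => j /andP[_ lt]; rewrite mkv ?c1j.
  have SHc1 : SH (size gs) (cv c1) = SH (size gs) (cv cm).
    by rewrite /SH; apply: eq_big_nat => j /andP[_ lt]; rewrite mkv ?c1j.
  have Hc1 : c1 \in facts (e :: gs) n.
    rewrite facts_S mk0 // SAc1; apply/eqP; rewrite /n mulnDl; lia.
  have Sn : in_sg (e :: gs) n.
    by apply/insg_S; exists (cm ord0 + f), (cv cm); rewrite mulnDl /n; lia.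
  set L := ord (e :: gs) n.
  have L0L : L0 + f <= L.
    have := ord_ge Hc1; rewrite flenE mk0 // SHc1; lia.
  have [cx [Hcx Lcx]] := ord_exS Hc1.
  have nE : n = s + f * e by [].
  have E3 := SA_SD (cv cx) He.
  have E4 : L * e = cx ord0 * e + SH (size gs) (cv cx) * e by rewrite /L Lcx mulnDl.
  set r := n - L * e.
  have Ar : Ap (e :: [seq a - e | a <- gs]) e r by apply/Hadj; exists n.
  have LE : L = L0 + f.
    apply/eqP; rewrite eqn_leq L0L andbT leqNgt; apply/negP => lt.
    apply: Af.2; set D := L - (L0 + f) - 1.
    have LD : L = L0 + f + D + 1 by rewrite /D; lia.
    have E5 : L * e = L0 * e + f * e + D * e + e by rewrite LD !mulnDl mul1n.
    split; first lia.
    have -> : f - e = r + D * e by rewrite /r; lia.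
    apply: IB_add; [exact: Ar.1 | exact: IB_ke].
  have rf : r = f by rewrite /r LE mulnDl; lia.
  have Len : L * e <= n by lia.
  have Ln : L <= n by apply: leq_trans Len; rewrite leq_pmulr.
  have fn' : f <= n by rewrite /n; lia.
  exists n; split => //; rewrite /dcount /dmax_at.
  have key : forall x : {ffun 'I_(size [seq a - e | a <- gs]).+1 -> 'I_f.+1},
      x \in facts (e :: [seq a - e | a <- gs]) f ->
      (x ord0 : nat) = 0 /\ SD e gs (cv x) = f /\ forall j, j < size gs -> cv x j <= f.
    move=> x; rewrite facts_B => /eqP Hx0.
    have Hx : (x ord0 : nat) * e + SD e gs (cv x) = f by [].
    have x00 : (x ord0 : nat) = 0.
      have [//|p] := posnP (x ord0); exfalso.
      have E : (x ord0 : nat) * e = (x ord0).-1 * e + e by rewrite -{1}(prednK p) mulSn addnC.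
      apply: Af.2; split; first lia.
      apply/insg_B; exists ((x ord0).-1), (cv x). move: Hx E; set P := (x ord0).-1 * e; set Q := SD e gs (cv x). move=> H1 H2; rewrite H2 in H1; lia.
    split => //; split; first lia.
    move=> j lt; apply: leq_trans (h_SD (cv x) He lt) _; lia.
  apply: (@card_le_inj _ _ _ _ (fun x : {ffun 'I_(size [seq a - e | a <- gs]).+1 -> 'I_f.+1} =>
       mk (size gs) n (L - SH (size gs) (cv x)) (cv x))).
  - move=> x x' Hx Hx' E.
    have [x0 [SDx bdx]] := key x Hx; have [x0' [SDx' bdx']] := key x' Hx'.
    have Ej : forall j, j < size gs -> cv x j = cv x' j.
      move=> j lt; have b1 := leq_trans (bdx j lt) fn'; have b2 := leq_trans (bdx' j lt) fn'.
      by have := congr1 (fun c => cv c j) E; rewrite /= !mkv.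
    by apply: cv_eq; [rewrite x0 x0' | move=> j lt; apply: Ej; move: lt; by rewrite size_map].
  - move=> x Hx; have [x0 [SDx bdx]] := key x Hx.
    have bx : forall j, j < size gs -> cv x j <= n by move=> j lt; apply: leq_trans (bdx j lt) fn'.
    have SAx : SA gs (cv (mk (size gs) n (L - SH (size gs) (cv x)) (cv x))) = SA gs (cv x).
      by rewrite /SA; apply: eq_big_nat => j /andP[_ lt]; rewrite mkv ?bx.
    have SHx : SH (size gs) (cv (mk (size gs) n (L - SH (size gs) (cv x)) (cv x))) = SH (size gs) (cv x).
      by rewrite /SH; apply: eq_big_nat => j /andP[_ lt]; rewrite mkv ?bx.
    have SHf : SH (size gs) (cv x) <= f by apply: leq_trans (SH_SD (cv x) He) _; rewrite SDx.
    have E6 : (L - SH (size gs) (cv x)) * e + SH (size gs) (cv x) * e = L * e.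
      by rewrite -mulnDl subnK //; lia.
    have E7 := SA_SD (cv x) He.
    have Lsn : L - SH (size gs) (cv x) <= n by lia.
    rewrite inE facts_S flenE mk0 // SAx SHx; apply/andP; split; apply/eqP; lia.
have [f1 [Mf1 _]] := up w1 Ap1 nz1.
have [fs [Mfs Hfs]] := @argmax_bounded (maxAp (e :: [seq a - e | a <- gs]) e)
    (dcount (e :: [seq a - e | a <- gs])) (N + e)
    (fun f H => let: And3 a _ _ := H in Abd f a) (ex_intro _ f1 Mf1).
have UB : forall n, in_sg (e :: gs) n -> dmax_at (e :: gs) n <= dcount (e :: [seq a - e | a <- gs]) fs.
  move=> n Sn.
  have Ar : Ap (e :: [seq a - e | a <- gs]) e (n - ord (e :: gs) n * e) by apply/Hadj; exists n.
  have [f [Mf [lef IBf]]] := up0 _ Ar.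
  apply: leq_trans (dmax_le n) _; apply: leq_trans (Hfs f Mf).
  exact: dcount_mono posB lef IBf.
have [n [Sn Hn]] : exists n, in_sg (e :: gs) n /\ dcount (e :: [seq a - e | a <- gs]) fs <= dmax_at (e :: gs) n.
  by apply: achieve; case: Mfs.
exists (dcount (e :: [seq a - e | a <- gs]) fs); split; split.
- by exists n; split => //; apply/eqP; rewrite eqn_leq Hn UB.
- by move=> k [m [Sm ->]]; apply: UB.
- by exists fs.
- by move=> k [f [Mf ->]]; apply: Hfs.
Qed.
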